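(* Let $\mu$ be a non-atomic probability distribution on $[0,1]$ and $r:[0,1]\to\mathbb{R}$ a right-continuous function of bounded variation. Define $b^{(0)}=0$ and, for $k\ge1$, $$u^{(k)}=\arg\min_{u\in\mathcal{C}^+}\|r-b^{(k-1)}-u\|,\qquad b^{(k)}=\arg\min_{b\in\mathcal{C}^-}\|r-u^{(k)}-b\|,\qquad r^{(k)}=u^{(k)}+b^{(k)}.$$ Then $\lim_{k\to\infty}\|r^{(k)}-r\|=0$.
   Context: $\|g\|^2=\int_{[0,1]}g(x)^2\mu(dx)$ is the norm of $L_2(\mu)$; $\mathcal{C}^+$ is the closed convex cone of non-decreasing functions in $L_2(\mu)$ and $\mathcal{C}^-=-\mathcal{C}^+$ the cone of non-increasing functions; the minimizers are the (unique) metric projections onto these cones. *)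

(* Defs.v *)
From HB Require Import structures.
From mathcomp Require Import all_boot all_order all_algebra.
From mathcomp Require Import all_classical all_reals all_analysis.
Set Implicit Arguments. Unset Strict Implicit. Unset Printing Implicit Defensive.
Import Order.TTheory GRing.Theory Num.Theory numFieldNormedType.Exports.
Local Open Scope classical_set_scope.
Local Open Scope ring_scope.

Definition unit_itv (R : realType) : set R := `[0, 1].

Section L2defs.
Context (R : realType) (mu : probability R R).
Local Notation I01 := (@unit_itv R).

Definition L2 (g : R -> R) : Prop :=
  measurable_fun I01 g /\
  mu.-integrable I01 (fun x => ((g x) ^+ 2)%:E).

Definition L2norm (g : R -> R) : R :=
  Num.sqrt (fine (\int[mu]_(x in I01) ((g x) ^+ 2)%:E)).

Definition Cplus (g : R -> R) : Prop :=
  L2 g /\ exists v : R -> R,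
    (forall x y, 0 <= x -> x <= y -> y <= 1 -> v x <= v y) /\
    {ae mu, forall x : R, I01 x -> g x = v x}.

Definition Cminus (g : R -> R) : Prop := Cplus (fun x => - g x).

Definition is_proj (C : (R -> R) -> Prop) (f m : R -> R) : Prop :=
  C m /\ forall c, C c -> L2norm (fun x => f x - m x) <= L2norm (fun x => f x - c x).

End L2defs.

(* Main.v *)
Require Import Defs.
From HB Require Import structures.
From mathcomp Require Import all_boot all_order all_algebra.
From mathcomp Require Import all_classical all_reals all_analysis.
From mathcomp Require Import measurable_realfun zify ring lra.
Import Order.TTheory GRing.Theory Num.Theory numFieldNormedType.Exports.
Local Open Scope classical_set_scope.
Local Open Scope ring_scope.
Section Abs.
Context (R : realType) (P : (R -> R) -> Prop) (ip : (R -> R) -> (R -> R) -> R).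
Hypothesis PL : forall s t f g, P f -> P g -> P (fun x => s * f x + t * g x).
Hypothesis P0 : P (fun _ => 0).
Hypothesis ipC : forall f g, ip f g = ip g f.
Hypothesis ipL : forall s t f g h, P f -> P g -> P h ->
  ip (fun x => s * f x + t * g x) h = s * ip f h + t * ip g h.
Hypothesis ipge0 : forall f, P f -> 0 <= ip f f.

Lemma ipR s t f g h : P f -> P g -> P h ->
  ip h (fun x => s * f x + t * g x) = s * ip h f + t * ip h g.
Proof. by move=> *; rewrite ipC ipL // (ipC f) (ipC g). Qed.

Lemma PB {f g} : P f -> P g -> P (fun x => f x - g x).
Proof.
move=> pf pg; have -> : (fun x => f x - g x) = (fun x => 1 * f x + (-1) * g x).
  by apply/funext => x; ring.
exact: PL.
Qed.

Lemma QE2 s t f g : P f -> P g ->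
  ip (fun x => s * f x + t * g x) (fun x => s * f x + t * g x) =
  s ^+ 2 * ip f f + 2 * s * t * ip f g + t ^+ 2 * ip g g.
Proof.
move=> pf pg; rewrite ipL //; try exact: PL.
rewrite !ipR // (ipC g f); ring.
Qed.

Lemma Qsub f g : P f -> P g ->
  ip (fun x => f x - g x) (fun x => f x - g x) =
  ip f f - 2 * ip f g + ip g g.
Proof.
move=> pf pg; have -> : (fun x => f x - g x) = (fun x => 1 * f x + (-1) * g x).
  by apply/funext => x; ring.
rewrite QE2 //; ring.
Qed.

Lemma Qadd f g : P f -> P g ->
  ip (fun x => f x + g x) (fun x => f x + g x) =
  ip f f + 2 * ip f g + ip g g.
Proof.
move=> pf pg; have -> : (fun x => f x + g x) = (fun x => 1 * f x + 1 * g x).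
  by apply/funext => x; ring.
rewrite QE2 //; ring.
Qed.

Lemma ipRB f g h : P f -> P g -> P h ->
  ip h (fun x => f x - g x) = ip h f - ip h g.
Proof.
move=> pf pg ph; have -> : (fun x => f x - g x) = (fun x => 1 * f x + (-1) * g x).
  by apply/funext => x; ring.
rewrite ipR //; ring.
Qed.

Lemma ipLD f g h : P f -> P g -> P h ->
  ip (fun x => f x + g x) h = ip f h + ip g h.
Proof.
move=> pf pg ph; have -> : (fun x => f x + g x) = (fun x => 1 * f x + 1 * g x).
  by apply/funext => x; ring.
rewrite ipL //; ring.
Qed.

Lemma ipRD f g h : P f -> P g -> P h ->
  ip h (fun x => f x + g x) = ip h f + ip h g.
Proof. by move=> *; rewrite ipC ipLD // (ipC f) (ipC g). Qed.

Lemma young {f g s} : P f -> P g -> 0 < s ->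
  - (2 * ip f g) <= s * ip f f + ip g g / s.
Proof.
move=> pf pg s0.
have := ipge0 _ (PL s 1 _ _ pf pg); rewrite QE2 // => h.
have h2 : 0 <= s * (s * ip f f + ip g g / s + 2 * ip f g).
  have -> : s * (s * ip f f + ip g g / s + 2 * ip f g) =
     s ^+ 2 * ip f f + 2 * s * 1 * ip f g + 1 ^+ 2 * ip g g.
    by field; rewrite gt_eqF.
  by [].
rewrite pmulr_rge0 // in h2; lra.
Qed.

Lemma Qsub_le {f g s} : P f -> P g -> 0 < s ->
  ip (fun x => f x - g x) (fun x => f x - g x) <=
  (1 + s) * ip f f + (1 + s^-1) * ip g g.
Proof.
move=> pf pg s0; rewrite Qsub //.
have h' := young pf pg s0.
have -> : (1 + s^-1) * ip g g = ip g g + ip g g / s by rewrite /= mulrDl mul1r mulrC.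
lra.
Qed.

Lemma CS {f g} : P f -> P g -> ip f g ^+ 2 <= ip f f * ip g g.
Proof.
move=> pf pg.
set X := ip f f; set Y := ip g g; set p := ip f g.
have X0 : 0 <= X by exact: ipge0.
have Y0 : 0 <= Y by exact: ipge0.
have h1 := ipge0 _ (PL Y (- p) _ _ pf pg); rewrite QE2 // -/X -/Y -/p in h1.
have h2 := ipge0 _ (PL p (- X) _ _ pf pg); rewrite QE2 // -/X -/Y -/p in h2.
have h3 := ipge0 _ (PL 1 1 _ _ pf pg); rewrite QE2 // -/X -/Y -/p in h3.
have h4 := ipge0 _ (PL 1 (-1) _ _ pf pg); rewrite QE2 // -/X -/Y -/p in h4.
have [Yp|] := ltP 0 Y.
  have : 0 <= Y * (X * Y - p ^+ 2) by nra.
  by rewrite pmulr_rge0 //; lra.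
rewrite le_eqVlt ltNge Y0 orbF => /eqP Y00.
have [Xp|] := ltP 0 X.
  have : 0 <= X * (X * Y - p ^+ 2) by nra.
  by rewrite pmulr_rge0 //; lra.
rewrite le_eqVlt ltNge X0 orbF => /eqP X00.
rewrite Y00 X00 in h3 h4 *.
have -> : p = 0 by nra.
by rewrite expr0n mulr0.
Qed.

Lemma RL (a b : R) : 0 <= b ->
  (forall t, 0 < t -> t <= 1 -> 0 <= 2 * t * a + t ^+ 2 * b) -> 0 <= a.
Proof.
move=> b0 h; rewrite leNgt; apply/negP => a0.
have ba : 0 < b - a by lra.
set t := - a / (b - a).
have t0 : 0 < t by rewrite /t divr_gt0 //; lra.
have t1 : t <= 1 by rewrite /t ler_pdivrMr //; lra.
have ht : t * (b - a) = - a by rewrite /t divfK // gt_eqF.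
have := h t t0 t1.
have -> : 2 * t * a + t ^+ 2 * b = t * (2 * a + t * b) by ring.
rewrite pmulr_rge0 // => h2.
have : 0 <= (b - a) * (2 * a + t * b) by nra.
have -> : (b - a) * (2 * a + t * b) = 2 * a * (b - a) + (t * (b - a)) * b by ring.
rewrite ht; nra.
Qed.


Section Proj.
Variable C : (R -> R) -> Prop.
Hypothesis CP : forall c, C c -> P c.
Hypothesis Ccl : forall s t a c, 0 <= s -> 0 <= t -> C a -> C c ->
  C (fun x => s * a x + t * c x).

Lemma proj_ineq f m : P f -> C m ->
  (forall c, C c -> ip (fun x => f x - m x) (fun x => f x - m x) <=
     ip (fun x => f x - c x) (fun x => f x - c x)) ->
  (forall c, C c -> ip (fun x => f x - m x) c <= 0) /\
  0 <= ip (fun x => f x - m x) m.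
Proof.
move=> pf Cm hmin; have pm := CP _ Cm.
set e := fun x => f x - m x.
have pe : P e by exact: PB.
split.
  move=> c Cc; have pc := CP _ Cc.
  rewrite -oppr_ge0; apply: (RL _ _ (ipge0 _ pc)) => t t0 t1.
  have := hmin _ (Ccl _ _ _ _ (ler01) (ltW t0) Cm Cc).
  have -> : (fun x => f x - (1 * m x + t * c x)) = (fun x => 1 * e x + (- t) * c x).
    by apply/funext => x; rewrite /e; ring.
  rewrite QE2 // sqrrN expr1n; lra.
apply: (RL _ _ (ipge0 _ pm)) => t t0 t1.
have := hmin _ (Ccl (1 - t) 0 m m _ (lexx 0) Cm Cm).
have -> : (fun x => f x - ((1 - t) * m x + 0 * m x)) = (fun x => 1 * e x + t * m x).
  by apply/funext => x; rewrite /e; ring.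
rewrite QE2 // expr1n; move=> h; have : 0 <= 1 - t by lra.
move=> /h; lra.
Qed.

Lemma pyth f m c : P f -> C m -> C c ->
  (forall c, C c -> ip (fun x => f x - m x) (fun x => f x - m x) <=
     ip (fun x => f x - c x) (fun x => f x - c x)) ->
  ip (fun x => f x - m x) (fun x => f x - m x) +
  ip (fun x => m x - c x) (fun x => m x - c x) <=
  ip (fun x => f x - c x) (fun x => f x - c x).
Proof.
move=> pf Cm Cc hmin; have pm := CP _ Cm; have pc := CP _ Cc.
have [h1 h2] := proj_ineq _ _ pf Cm hmin.
have pe : P (fun x => f x - m x) by exact: PB.
have pmc : P (fun x => m x - c x) by exact: PB.
have -> : (fun x => f x - c x) = (fun x => (f x - m x) + (m x - c x)).
  by apply/funext => x; ring.
rewrite (Qadd (fun x => f x - m x) (fun x => m x - c x)) // (ipRB m c (fun x => f x - m x)) //.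
have := h1 _ Cc; lra.
Qed.
End Proj.


Section Main.
Variables (Cp Cm : (R -> R) -> Prop).
Hypothesis CpP : forall c, Cp c -> P c.
Hypothesis CmP : forall c, Cm c -> P c.
Hypothesis Cpcl : forall s t a c, 0 <= s -> 0 <= t -> Cp a -> Cp c ->
  Cp (fun x => s * a x + t * c x).
Hypothesis Cmcl : forall s t a c, 0 <= s -> 0 <= t -> Cm a -> Cm c ->
  Cm (fun x => s * a x + t * c x).
Variables (v w r : R -> R) (u b : nat -> R -> R).
Hypothesis Cpv : Cp v.
Hypothesis Cmw : Cm w.
Hypothesis hr : r = (fun x => v x + w x).
Hypothesis hb0 : b 0%N = (fun _ => 0).
Hypothesis hu : forall k, (0 < k)%N -> Cp (u k) /\ forall c, Cp c ->
  ip (fun x => (r x - b k.-1 x) - u k x) (fun x => (r x - b k.-1 x) - u k x)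
  <= ip (fun x => (r x - b k.-1 x) - c x) (fun x => (r x - b k.-1 x) - c x).
Hypothesis hb : forall k, (0 < k)%N -> Cm (b k) /\ forall c, Cm c ->
  ip (fun x => (r x - u k x) - b k x) (fun x => (r x - u k x) - b k x)
  <= ip (fun x => (r x - u k x) - c x) (fun x => (r x - u k x) - c x).

Local Notation Q f := (ip f f).
Let e k := fun x => r x - u k x - b k x.
Let e' k := fun x => r x - b k.-1 x - u k x.
Let G k := Q (e k).
Let V k := fun x => v x - u k x.

Let Pr : P r.
Proof.
rewrite hr; have -> : (fun x => v x + w x) = (fun x => 1 * v x + 1 * w x).
  by apply/funext => x; ring.
by apply: PL; [exact: CpP | exact: CmP].
Qed.

Let Cm0 : Cm (fun _ => 0).
Proof.
have -> : (fun _ : R => 0 : R) = (fun x => 0 * w x + 0 * w x).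
  by apply/funext => x; ring.
exact: Cmcl.
Qed.

Let Cmb k : Cm (b k).
Proof. by case: k => [|k]; [rewrite hb0 | exact: (proj1 (hb _ (ltn0Sn k)))]. Qed.
Let Pb k : P (b k). Proof. exact: CmP. Qed.
Let Pu k : (0 < k)%N -> P (u k). Proof. by move=> /hu [] /CpP. Qed.
Let Pe k : (0 < k)%N -> P (e k).
Proof. by move=> k0; apply: PB; [apply: PB => //; exact: Pu|]. Qed.
Let Pe' k : (0 < k)%N -> P (e' k).
Proof. by move=> k0; apply: PB; [apply: PB|exact: Pu]. Qed.
Let PV k : (0 < k)%N -> P (V k).
Proof. by move=> k0; apply: PB; [exact: CpP|exact: Pu]. Qed.

Let Gge0 k : (0 < k)%N -> 0 <= G k.
Proof. by move=> k0; apply: ipge0; exact: Pe. Qed.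

Let F1 k : (0 < k)%N ->
  G k + Q (fun x => b k x - b k.-1 x) <= Q (e' k).
Proof.
move=> k0; have [Cbk hmin] := hb _ k0.
have pf : P (fun x => r x - u k x) by apply: PB => //; exact: Pu.
have := pyth Cm CmP Cmcl _ _ _ pf Cbk (Cmb k.-1) hmin.
have -> : (fun x => r x - u k x - b k.-1 x) = e' k.
  by apply/funext => x; rewrite /e'; ring.
by [].
Qed.

Let F2 k : (0 < k)%N ->
  Q (e' k.+1) + Q (fun x => u k.+1 x - u k x) <= G k.
Proof.
move=> k0; have [Cuk hmin] := hu _ (ltn0Sn k).
have pf : P (fun x => r x - b k x) by apply: PB.
have := pyth Cp CpP Cpcl _ _ _ pf Cuk (proj1 (hu _ k0)) hmin.
have -> : (fun x => r x - b k x - u k x) = e k.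
  by apply/funext => x; rewrite /e; ring.
by [].
Qed.

Let Gdec k : (0 < k)%N -> G k.+1 <= G k.
Proof.
move=> k0; have := F1 _ (ltn0Sn k); have := F2 _ k0.
have := ipge0 _ (PB (Pu _ (ltn0Sn k)) (Pu _ k0)).
have := ipge0 _ (PB (Pb k.+1) (Pb k)).
rewrite /G; lra.
Qed.

Let Gmono i k : (0 < i)%N -> (i <= k)%N -> G k <= G i.
Proof.
move=> i0; elim: k => [|k IH]; first by rewrite leqn0 => /eqP i00; rewrite i00 in i0.
rewrite leq_eqVlt => /orP[/eqP <- //|]; rewrite ltnS => ik.
apply: le_trans (IH ik); apply: Gdec; exact: leq_trans ik.
Qed.

Let F3 k : (0 < k)%N ->
  G k <= ip (fun x => b k.-1 x - b k x) (V k).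
Proof.
move=> k0; have [Cuk hminu] := hu _ k0; have [Cbk hminb] := hb _ k0.
have pu := Pu _ k0; have pbk := Pb k; have pbk1 := Pb k.-1.
have pfu : P (fun x => r x - b k.-1 x) by apply: PB.
have pfb : P (fun x => r x - u k x) by apply: PB.
have [hu1 hu2] := proj_ineq Cp CpP Cpcl _ _ pfu Cuk hminu.
have [hb1 hb2] := proj_ineq Cm CmP Cmcl _ _ pfb Cbk hminb.
have pw : P w by exact: CmP.
have pv : P v by exact: CpP.
have pD : P (fun x => b k.-1 x - b k x) by exact: PB.
have pW : P (fun x => w x - b k x) by exact: PB.
rewrite /G.
have E1 : e k = (fun x => V k x + (w x - b k x)).
  by apply/funext => x; rewrite /e /V hr; ring.
rewrite {2}E1 (ipRD (V k) (fun x => w x - b k x) (e k)) //; try exact: PV; try exact: Pe.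
rewrite (ipRB w (b k) (e k)) //; last exact: Pe.
have E2 : e k = (fun x => e' k x + (b k.-1 x - b k x)).
  by apply/funext => x; rewrite /e /e'; ring.
rewrite {1}E2 (ipLD (e' k) (fun x => b k.-1 x - b k x) (V k)) //; try exact: PV; try exact: Pe'.
rewrite /V (ipRB v (u k) (e' k)) //; last exact: Pe'.
have := hu1 _ Cpv; have := hb1 _ Cmw.
rewrite /e /e' in hu2 hb2 *; lra.
Qed.

Let M := Q (V 1) + G 1.

Let F5 k : Q (V k.+1) <= k.+1%:R * (Q (V 1) + G 1 - G k.+1).
Proof.
elim: k => [|k IH]; first by rewrite mul1r; lra.
set n : R := k.+1%:R.
have n0 : 0 < n by rewrite /n ltr0n.
have pD : P (fun x => u k.+2 x - u k.+1 x) by apply: PB; exact: Pu.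
have EV : V k.+2 = (fun x => V k.+1 x - (u k.+2 x - u k.+1 x)).
  by apply/funext => x; rewrite /V; ring.
have ni0 : 0 < n^-1 by rewrite invr_gt0.
have h1 := Qsub_le (PV _ (ltn0Sn k)) pD ni0.
move: h1; rewrite /= -EV invrK => h1.
have h3 : Q (fun x => u k.+2 x - u k.+1 x) <= G k.+1 - G k.+2.
  have := F2 _ (ltn0Sn k); have := F1 _ (ltn0Sn k.+1); have := ipge0 _ (PB (Pb k.+2) (Pb k.+1)).
  rewrite /G; lra.
have h2 : (1 + n^-1) * Q (V k.+1) <= (n + 1) * (Q (V 1) + G 1 - G k.+1).
  have -> : (n + 1) = (1 + n^-1) * n by field; rewrite gt_eqF.
  rewrite -mulrA; apply: ler_wpM2l => //.
  by rewrite addr_ge0 // invr_ge0 ltW.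
have h4 : (1 + n) * Q (fun x => u k.+2 x - u k.+1 x) <= (1 + n) * (G k.+1 - G k.+2).
  by apply: ler_wpM2l => //; lra.
rewrite -natr1 -/n.
have -> : (n + 1) * (Q (V 1) + G 1 - G k.+2) =
  (n + 1) * (Q (V 1) + G 1 - G k.+1) + (1 + n) * (G k.+1 - G k.+2) by ring.
apply: (le_trans h1); exact: lerD h2 h4.
Qed.

Let F6 k : (0 < k)%N -> Q (V k) <= k%:R * M.
Proof.
case: k => // k _; apply: le_trans (F5 k) _; apply: ler_wpM2l => //.
rewrite /M; have := Gge0 _ (ltn0Sn k); lra.
Qed.

Let M0 : 0 <= M.
Proof. rewrite /M; have := ipge0 _ (PV _ (ltn0Sn 0)); have := Gge0 _ (ltn0Sn 0); lra. Qed.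

Let F7 k : (1 < k)%N -> G k ^+ 2 <= k%:R * M * (G k.-1 - G k).
Proof.
move=> k1; have k0 : (0 < k)%N by exact: ltnW.
have k10 : (0 < k.-1)%N by case: k k1 {k0} => // -[].
have h3 := F3 _ k0.
have g0 := Gge0 _ k0.
have pD : P (fun x => b k.-1 x - b k x) by apply: PB.
have hcs := CS pD (PV _ k0).
have hD : Q (fun x => b k.-1 x - b k x) <= G k.-1 - G k.
  have := F1 _ k0; have := F2 _ k10; rewrite prednK //.
  have -> : (fun x => b k.-1 x - b k x) = (fun x => (-1) * (b k x - b k.-1 x) + 0 * b k x).
    by apply/funext => x; ring.
  rewrite QE2 //; last exact: PB.
  rewrite /G; have := ipge0 _ (PB (Pu _ k0) (Pu _ k10)); nra.
have qD0 := ipge0 _ pD.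
have qV0 := ipge0 _ (PV _ k0).
have := F6 _ k0.
have : G k ^+ 2 <= ip (fun x => b k.-1 x - b k x) (V k) ^+ 2 by nra.
move=> h1 h2.
apply: le_trans h1 _; apply: le_trans hcs _.
rewrite mulrC; apply: ler_pM => //.
Qed.

Let F8 N : (1 < N)%N -> forall j, (j <= N.+1)%N ->
  j%:R * G (N.*2) ^+ 2 <= (N.*2)%:R * M * (G N.-1 - G (N.-1 + j)).
Proof.
move=> N1; elim => [|j IH] hj; first by rewrite addn0 subrr mulr0 mul0r.
have IH' := IH (ltnW hj).
set k := (N.-1 + j.+1)%N.
have k1 : (1 < k)%N by rewrite /k; lia.
have kN : (k <= N.*2)%N by rewrite /k; lia.
have h7 := F7 _ k1.
have hk : G (N.*2) <= G k by apply: Gmono => //; lia.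
have g0 : 0 <= G (N.*2) by apply: Gge0; lia.
have hsq : G (N.*2) ^+ 2 <= G k ^+ 2 by nra.
have hk1 : k.-1 = (N.-1 + j)%N by rewrite /k; lia.
rewrite hk1 in h7.
have hd : 0 <= G (N.-1 + j) - G k.
  rewrite subr_ge0; apply: Gmono; rewrite /k; lia.
have hkM : k%:R * M * (G (N.-1 + j) - G k) <= (N.*2)%:R * M * (G (N.-1 + j) - G k).
  apply: ler_wpM2r => //; apply: ler_wpM2r => //; rewrite ler_nat //.
rewrite -natr1.
have -> : (N.*2)%:R * M * (G N.-1 - G k) =
  (N.*2)%:R * M * (G N.-1 - G (N.-1 + j)) + (N.*2)%:R * M * (G (N.-1 + j) - G k) by ring.
rewrite mulrDl mul1r; apply: lerD => //.
by apply: le_trans hsq _; apply: le_trans h7 _.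
Qed.
Let F9 N : (1 < N)%N -> G (N.*2) ^+ 2 <= 2 * M * (G N.-1 - G (N.*2)).
Proof.
move=> N1; have := F8 _ N1 _ (leqnn N.+1).
have -> : (N.-1 + N.+1)%N = N.*2 by lia.
have N0 : 0 < N%:R :> R by rewrite ltr0n; lia.
rewrite -natr1 -muln2 natrM => h.
rewrite -(ler_pM2l N0).
apply: le_trans _ (le_trans h _); first by rewrite mulrDl mul1r lerDl sqr_ge0.
by rewrite !mulrA.
Qed.

Lemma main_abs :
  (fun k => ip (fun x => r x - u k x - b k x) (fun x => r x - u k x - b k x))
  @ \oo --> 0.
Proof.
change (G @ \oo --> 0).
have M0' := M0.
pose g n := G n.+1.
have gni : nonincreasing_seq g.
  by apply/nonincreasing_seqP => n; exact: Gdec.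
have glb : has_lbound (range g).
  by exists 0 => _ [n _ <-]; exact: Gge0.
have gcv := nonincreasing_is_cvgn gni glb.
set l := limn g.
have lle n : l <= g n by exact: nonincreasing_cvgn_ge.
have l2 : forall eps, 0 < eps -> l ^+ 2 <= eps.
  move=> eps e0.
  set ee := eps / (2 * M + 1).
  have ee0 : 0 < ee by rewrite /ee divr_gt0 //; lra.
  have gl : g @ \oo --> l by exact: gcv.
  move: gl => /cvgrPdist_lt /(_ ee ee0) /filter_ex [N hN].
  have := F9 N.+2 isT.
  have -> : (N.+2).-1 = N.+1 by [].
  have hl : l <= G (N.+2).*2 by have := lle ((N.+2).*2).-1.
  have l0 : 0 <= l by apply: limr_ge => //; apply: nearW => n; exact: Gge0.
  move=> h.
  have h2 : l ^+ 2 <= G (N.+2).*2 ^+ 2 by nra.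
  have h3 : G N.+1 - G (N.+2).*2 <= ee.
    have := hN; rewrite /g; move: (hl) => hl'; move=> /ltW; rewrite ler_norml; lra.
  have h4 : 2 * M * (G N.+1 - G (N.+2).*2) <= 2 * M * ee by apply: ler_wpM2l => //; lra.
  have h5 : 2 * M * ee <= eps.
    rewrite /ee mulrA ler_pdivrMr; last lra.
    nra.
  lra.
have l0 : l = 0.
  apply/eqP; rewrite -sqrf_eq0 eq_le sqr_ge0 andbT.
  rewrite leNgt; apply/negP => lp.
  have := l2 _ (divr_gt0 lp (ltr0n _ 2)); lra.
have gl : g @ \oo --> l := gcv.
rewrite l0 in gl; rewrite -cvg_shiftS; exact: gl.
Qed.
End Main.

End Abs.

Section Conc.
Context (R : realType) (mu : probability R R).
Local Notation I := (@unit_itv R).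

Let mI : measurable I.
Proof. by rewrite /unit_itv; exact: measurable_itv. Qed.

Definition L2ip (f g : R -> R) : R := fine (\int[mu]_(x in I) (f x * g x)%:E).

Lemma int_le (h F : R -> R) : measurable_fun I h ->
  (forall x, I x -> `|h x| <= F x) ->
  mu.-integrable I (fun x => (F x)%:E) -> mu.-integrable I (fun x => (h x)%:E).
Proof.
move=> mh hF iF; apply: le_integrable iF => //.
  exact/measurable_EFinP.
move=> x Ix /=; rewrite lee_fin (le_trans (hF x Ix)) //.
exact: ler_norm.
Qed.

Lemma int_lin (A B : R -> R) a b :
  mu.-integrable I (fun x => (A x)%:E) -> mu.-integrable I (fun x => (B x)%:E) ->
  mu.-integrable I (fun x => (a * A x + b * B x)%:E).
Proof.
move=> iA iB.
have := integrableD mI (integrableZl mI a iA) (integrableZl mI b iB).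
by apply: eq_integrable => // x _ /=; rewrite EFinD !EFinM.
Qed.

Lemma L2_prod {f g} : L2 mu f -> L2 mu g ->
  mu.-integrable I (fun x => (f x * g x)%:E).
Proof.
move=> [mf if2] [mg ig2].
apply: (@int_le _ (fun x => 1 * f x ^+ 2 + 1 * g x ^+ 2)).
- exact: measurable_funM.
- move=> x _; rewrite normrM !mul1r.
  have := sqr_ge0 (`|f x| - `|g x|).
  rewrite -(real_normK (num_real (f x))) -(real_normK (num_real (g x))).
  have := normr_ge0 (f x); have := normr_ge0 (g x); nra.
- exact: int_lin.
Qed.

Lemma L2_lc s t f g : L2 mu f -> L2 mu g -> L2 mu (fun x => s * f x + t * g x).
Proof.
move=> [mf if2] [mg ig2].
have mh : measurable_fun I (fun x => s * f x + t * g x).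
  apply: measurable_funD; apply: measurable_funM => //; exact: measurable_cst.
split => //.
apply: (@int_le _ (fun x => (2 * s ^+ 2) * f x ^+ 2 + (2 * t ^+ 2) * g x ^+ 2)).
- by apply: measurable_funM.
- move=> x _; rewrite ger0_norm ?sqr_ge0 //.
  have := sqr_ge0 (s * f x - t * g x); nra.
- exact: int_lin.
Qed.

Lemma L2ipC f g : L2ip f g = L2ip g f.
Proof. by rewrite /L2ip; congr fine; apply: eq_integral => x _; rewrite mulrC. Qed.

Lemma L2ipL s t f g h : L2 mu f -> L2 mu g -> L2 mu h ->
  L2ip (fun x => s * f x + t * g x) h = s * L2ip f h + t * L2ip g h.
Proof.
move=> pf pg ph; rewrite /L2ip.
have ifh := L2_prod pf ph; have igh := L2_prod pg ph.
rewrite (eq_integral (fun x : R => (s%:E * (f x * h x)%:E + t%:E * (g x * h x)%:E)%E)); last first.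
  by move=> x _; rewrite -!EFinM -EFinD; congr EFin; ring.
rewrite integralD //; try by apply: integrableZl.
rewrite !integralZl //.
have fa := integrable_fin_num mI ifh; have fb := integrable_fin_num mI igh.
rewrite fineD ?fin_numM // !fineM //.
Qed.

Lemma L2ip_ge0 f : 0 <= L2ip f f.
Proof.
apply: fine_ge0; apply: integral_ge0 => x _.
by rewrite lee_fin -expr2 sqr_ge0.
Qed.

Lemma L2norm_ip f : L2norm mu f = Num.sqrt (L2ip f f).
Proof. by rewrite /L2norm /L2ip; congr (Num.sqrt (fine _)); apply: eq_integral => x _; rewrite expr2. Qed.

Lemma L2norm_eq f g : (forall x, I x -> g x = f x \/ g x = - f x) ->
  L2norm mu f = L2norm mu g.
Proof.
move=> h; rewrite /L2norm; congr (Num.sqrt (fine _)); apply: eq_integral => x /set_mem Ix.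
by case: (h x Ix) => ->; rewrite ?sqrrN.
Qed.

Lemma Cplus_cl s t a c : 0 <= s -> 0 <= t -> Cplus mu a -> Cplus mu c ->
  Cplus mu (fun x => s * a x + t * c x).
Proof.
move=> s0 t0 [pa [va [ma ha]]] [pc [vc [mc hc]]]; split; first exact: L2_lc.
exists (fun x => s * va x + t * vc x); split.
  move=> x y x0 xy y1; apply: lerD; apply: ler_wpM2l => //; [exact: ma | exact: mc].
by apply: filterS2 ha hc => x h1 h2 Ix; rewrite h1 // h2.
Qed.

Lemma Cminus_cl s t a c : 0 <= s -> 0 <= t -> Cminus mu a -> Cminus mu c ->
  Cminus mu (fun x => s * a x + t * c x).
Proof.
move=> s0 t0 ha hc; rewrite /Cminus.
have -> : (fun x => - (s * a x + t * c x)) = (fun x => s * (- a x) + t * (- c x)).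
  by apply/funext => x; ring.
exact: Cplus_cl.
Qed.

Lemma Cplus_L2 c : Cplus mu c -> L2 mu c.
Proof. by case. Qed.

Lemma Cminus_L2 c : Cminus mu c -> L2 mu c.
Proof.
move=> [h _].
suff -> : c = (fun x => -1 * (- c x) + 0 * (- c x)) by exact: L2_lc.
by apply/funext => x; ring.
Qed.

Definition clamp (x : R) : R := if x < 0 then 0 else if 1 < x then 1 else x.

Lemma clamp_in x : clamp x \in `[0, 1].
Proof.
rewrite in_itv /= /clamp; case: (ltP x 0) => hx; case: (ltP 1 x) => hx1;
  apply/andP; split; lra.
Qed.

Lemma clamp_id x : 0 <= x -> x <= 1 -> clamp x = x.
Proof. by move=> x0 x1; rewrite /clamp; case: (ltP x 0) => hx; case: (ltP 1 x) => hx1 //; lra. Qed.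

Lemma clamp_mono x y : x <= y -> clamp x <= clamp y.
Proof.
move=> xy; rewrite /clamp; case: (ltP x 0) => hx; case: (ltP 1 x) => hx1;
  case: (ltP y 0) => hy; case: (ltP 1 y) => hy1; lra.
Qed.

Lemma mono_Cplus (g : R -> R) :
  (forall x y, x \in `[0, 1] -> y \in `[0, 1] -> x <= y -> g x <= g y) ->
  Cplus mu (fun x => g (clamp x)).
Proof.
move=> hg.
have in0 : (0 : R) \in `[0, 1] by rewrite in_itv /= lexx ler01.
have in1 : (1 : R) \in `[0, 1] by rewrite in_itv /= lexx ler01.
have hom : {homo (fun x => g (clamp x)) : x y / x <= y}.
  by move=> x y xy; apply: hg; [exact: clamp_in|exact: clamp_in|exact: clamp_mono].
have mh : measurable_fun I (fun x => g (clamp x)) by exact: nondecreasing_measurable.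
split; last first.
  exists (fun x => g (clamp x)); split; first by move=> x y _ xy _; exact: hom.
  by apply: aeW.
split => //.
set K := `|g 0| + `|g 1|.
have hb x : - K <= g (clamp x) <= K.
  have hc := clamp_in x.
  have h0 : g 0 <= g (clamp x).
    by apply: (hg 0 (clamp x) in0 hc); move: hc; rewrite in_itv /= => /andP[].
  have h1 : g (clamp x) <= g 1.
    by apply: (hg (clamp x) 1 hc in1); move: hc; rewrite in_itv /= => /andP[].
  have n0 : - `|g 0| <= g 0 by rewrite lerNl -normrN ler_norm.
  have := ler_norm (g 1); have := normr_ge0 (g 1); have := normr_ge0 (g 0).
  by rewrite /K => *; apply/andP; split; lra.
apply: (@int_le _ (fun _ => K ^+ 2)).
- by apply: measurable_funM.
- move=> x _; rewrite ger0_norm ?sqr_ge0 //.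
  by have /andP[h1 h2] := hb x; nra.
- exact: finite_measure_integrable_cst.
Qed.
End Conc.

Theorem proposition3 (R : realType) (mu : probability R R)
  (r : R -> R) (u b : nat -> R -> R) :
  mu (@unit_itv R) = 1%E ->
  (forall x : R, mu [set x] = 0%E) ->
  (forall x : R, 0 <= x < 1 -> r t @[t --> x^'+] --> r x) ->
  bounded_variation 0 1 r ->
  b 0%N = (fun _ => 0) ->
  (forall k, (0 < k)%N ->
     is_proj mu (Cplus mu) (fun x => r x - b k.-1 x) (u k) /\
     is_proj mu (Cminus mu) (fun x => r x - u k x) (b k)) ->
  L2norm mu (fun x => u k x + b k x - r x) @[k --> \oo] --> 0.
Proof.
move=> _ _ _ bv hb0 hproj.
pose P1 := fine \o pos_tv 0 r.
pose N1 := fine \o neg_tv 0 r.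
have hP1 : forall x y, x \in `[0, 1] -> y \in `[0, 1] -> x <= y -> P1 x <= P1 y.
  by move=> x y hx hy xy; exact: (fine_neg_tv_nondecreasing (bounded_variationN bv) hx hy xy).
have hN1 : forall x y, x \in `[0, 1] -> y \in `[0, 1] -> x <= y -> N1 x <= N1 y.
  by move=> x y hx hy xy; exact: (fine_neg_tv_nondecreasing bv hx hy xy).
pose v := fun x => P1 (@clamp R x).
pose w := fun x => - N1 (@clamp R x).
have Cv : Cplus mu v by exact: mono_Cplus.
have Cw : Cminus mu w.
  rewrite /Cminus /w; have -> : (fun x => - - N1 (@clamp R x)) = (fun x => N1 (@clamp R x)).
    by apply/funext => x; rewrite opprK.
  exact: mono_Cplus.
have rvw : forall x, unit_itv x -> r x = v x + w x.
  move=> x Ix; have Ix' : x \in `[0, 1] := Ix.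
  have [x0 x1] : 0 <= x /\ x <= 1 by move: Ix'; rewrite in_itv /= => /andP[].
  rewrite /v /w (@clamp_id R) //.
  by rewrite (bounded_variation_pos_neg_tvE bv Ix').
pose r' := fun x => v x + w x.
have key := @main_abs R (L2 mu) (@L2ip R mu) (@L2_lc R mu) (@L2ipC R mu) (@L2ipL R mu)
  (fun f _ => @L2ip_ge0 R mu f) (Cplus mu) (Cminus mu) (@Cplus_L2 R mu) (@Cminus_L2 R mu)
  (@Cplus_cl R mu) (@Cminus_cl R mu) v w r' u b Cv Cw erefl hb0.
have hu' : forall k, (0 < k)%N -> Cplus mu (u k) /\ forall c, Cplus mu c ->
  L2ip R mu (fun x => r' x - b k.-1 x - u k x) (fun x => r' x - b k.-1 x - u k x)
  <= L2ip R mu (fun x => r' x - b k.-1 x - c x) (fun x => r' x - b k.-1 x - c x).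
  move=> k k0; have [[Cu hmin] _] := hproj k k0; split => // c Cc.
  have E1 : forall g, L2norm mu (fun x => r x - b k.-1 x - g x) =
    Num.sqrt (L2ip R mu (fun x => r' x - b k.-1 x - g x) (fun x => r' x - b k.-1 x - g x)).
    by move=> g; rewrite -L2norm_ip; apply: L2norm_eq => x Ix; left; rewrite rvw.
  by have := hmin c Cc; rewrite /= !E1 ler_sqrt //; exact: L2ip_ge0.
have hb' : forall k, (0 < k)%N -> Cminus mu (b k) /\ forall c, Cminus mu c ->
  L2ip R mu (fun x => r' x - u k x - b k x) (fun x => r' x - u k x - b k x)
  <= L2ip R mu (fun x => r' x - u k x - c x) (fun x => r' x - u k x - c x).
  move=> k k0; have [_ [Cb hmin]] := hproj k k0; split => // c Cc.
  have E1 : forall g, L2norm mu (fun x => r x - u k x - g x) =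
    Num.sqrt (L2ip R mu (fun x => r' x - u k x - g x) (fun x => r' x - u k x - g x)).
    by move=> g; rewrite -L2norm_ip; apply: L2norm_eq => x Ix; left; rewrite rvw.
  by have := hmin c Cc; rewrite /= !E1 ler_sqrt //; exact: L2ip_ge0.
have E : (fun k => L2norm mu (fun x => u k x + b k x - r x)) =
  (fun k => Num.sqrt (L2ip R mu (fun x => r' x - u k x - b k x) (fun x => r' x - u k x - b k x))).
  apply/funext => k; rewrite -L2norm_ip; apply: L2norm_eq => x Ix; right.
  by rewrite rvw // /r'; lra.
rewrite E -sqrtr0.
apply: (cvg_comp _ _ (key hu' hb')); exact: sqrt_continuous.
Qed.
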